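(* Let $X$ be an infinite discrete space and $G$ a subgroup of $\mathrm S(X)$ with the permutation topology $\tau_\partial$. Let $\mathcal U_X$ be the maximal equiuniformity on $X$, $\mathcal U$ the uniformity on $G$ defined below, and $L\wedge R$ the Roelcke uniformity of $G$. (1) Suppose that for any points $x_1,\dots,x_n\in X$, $n\in\mathbb N$, and any $g,h\in G$ with $h(x_k)\in \mathrm{St}_{x_1,\dots,x_n}\,g(x_k)$ for $k=1,\dots,n$, there exist $f\in\mathrm{St}_{x_1,\dots,x_n}$ and $g'\in g\,\mathrm{St}_{x_1,\dots,x_n}$ with $h=f\circ g'$. Then $L\wedge R=\mathcal U$. (2) If $L\wedge R=\mathcal U$ and $\mathcal U_X$ is totally bounded, then $G$ is Roelcke precompact and the Roelcke compactification of $G$ is the closure of $\imath(G)$ in $(\beta_GX)^X$. (3) Suppose $L\wedge R=\mathcal U$ and $\mathcal U_X$ is totally bounded, and suppose that for every point $x\in\beta_GX\setminus X$ and every entourage $U$ of $\tilde{\mathcal U}_X$ there exist points $x_1,\dots,x_n\in X$ and an entourage $V$ of $\tilde{\mathcal U}_X$ such that for every $g\in G$ $$\{h\in G\mid (g(x_k),h(x_k))\in V,\ k=1,\dots,n\}\subset\{h\in G\mid (g(x),h(x))\in U\}.$$ Then $\mathcal U=\tilde{\mathcal U}$ and the Roelcke compactification of $(G,\tau_\partial)$ is the enveloping Ellis semigroup of the action $G\curvearrowright\beta_GX$, i.e. the closure of $\jmath(G)$ in $(\beta_GX)^{\beta_GX}$.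
   Context: $\tau_\partial$: group topology with identity neighbourhood base the pointwise stabilizers $\mathrm{St}_{x_1,\dots,x_n}=\{g\mid g(x_i)=x_i\}$. The maximal equiuniformity $\mathcal U_X$ has as base the partitions $\{\mathrm{St}_{x_1,\dots,x_n}x\mid x\in X\}$ of $X$ into orbits of stabilizers, $x_1,\dots,x_n\in X$. $\beta_GX$ is the completion of $X$ with respect to $\mathcal U_X$ (when totally bounded, the maximal equivariant compactification), $\tilde{\mathcal U}_X$ the extension of $\mathcal U_X$ to $\beta_GX$; each $g\in G$ extends continuously to $\beta_GX$. $\imath:G\to X^X\subset(\beta_GX)^X$, $\imath(g)=(g(x))_{x\in X}$, and $\jmath:G\to(\beta_GX)^{\beta_GX}$, $\jmath(g)=(g(x))_{x\in\beta_GX}$. $\mathcal U$ is the restriction to $\imath(G)=G$ of the product uniformity on $X^X$ of copies of $\mathcal U_X$ (base: coverings $\{\{h\mid (g(x_k),h(x_k))\in\mathrm U,\ k\le n\}\mid g\in G\}$); $\tilde{\mathcal U}$ is the restriction to $\jmath(G)=G$ of the product uniformity on $(\beta_GX)^{\beta_GX}$ of copies of $\tilde{\mathcal U}_X$. The Roelcke uniformity $L\wedge R$ is the greatest lower bound of the left and right uniformities; $G$ is Roelcke precompact if it is totally bounded, and then the Roelcke compactification is the completion of $G$ with respect to $L\wedge R$. *)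

(* Defs.v *)
From HB Require Import structures.
From mathcomp Require Import all_boot all_order all_algebra.
From mathcomp Require Import all_classical all_reals all_analysis.
Set Implicit Arguments. Unset Strict Implicit. Unset Printing Implicit Defensive.
Local Open Scope classical_set_scope.

Definition ent (T : Type) := set (set (T * T)).

Definition gen (T : Type) (Bs : ent T) : ent T :=
  [set D | exists E, Bs E /\ E `<=` D].

Definition is_uniformity (T : Type) (W : ent T) : Prop :=
  W setT /\
  (forall D E, W D -> D `<=` E -> W E) /\
  (forall D E, W D -> W E -> W (D `&` E)) /\
  (forall D, W D -> forall x, D (x, x)) /\
  (forall D, W D -> W [set p | D (p.2, p.1)]) /\
  (forall D, W D -> exists E, W E /\
      forall x y z, E (x, y) -> E (y, z) -> D (x, z)).

Definition is_meet (T : Type) (W1 W2 W : ent T) : Prop :=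
  [/\ is_uniformity W, W `<=` W1, W `<=` W2 &
      forall W', is_uniformity W' -> W' `<=` W1 -> W' `<=` W2 -> W' `<=` W].

Definition tot_bounded (T : Type) (W : ent T) : Prop :=
  forall D, W D -> exists F : set T, finite_set F /\
    forall x, exists2 y, F y & D (y, x).

Definition perm_subgroup (X : Type) (G : set (X -> X)) : Prop :=
  [/\ forall g, G g -> bijective g,
      G id,
      (forall g h, G g -> G h -> G (g \o h)) &
      (forall g, G g -> exists h, [/\ G h, cancel g h & cancel h g])].

Definition GT (X : Type) (G : set (X -> X)) := {g : X -> X | G g}.

Definition St (X : Type) (G : set (X -> X)) (F : set X) : set (X -> X) :=
  [set s | G s /\ forall x, F x -> s x = x].

Definition leftU (X : Type) (G : set (X -> X)) : ent (GT G) :=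
  gen [set D | exists F : set X, finite_set F /\
    D = [set p : GT G * GT G | exists2 s, St G F s & proj1_sig p.2 = proj1_sig p.1 \o s]].
Arguments leftU {X} G.

Definition rightU (X : Type) (G : set (X -> X)) : ent (GT G) :=
  gen [set D | exists F : set X, finite_set F /\
    D = [set p : GT G * GT G | exists2 s, St G F s & proj1_sig p.2 = s \o proj1_sig p.1]].
Arguments rightU {X} G.

(* maximal equiuniformity U_X: base the partitions into St_F-orbits *)
Definition UX (X : Type) (G : set (X -> X)) : ent X :=
  gen [set D | exists F : set X, finite_set F /\
    D = [set p : X * X | exists2 s, St G F s & p.2 = s p.1]].
Arguments UX {X} G.

(* the uniformity \mathcal U on G: restriction of the product uniformity of
   X^X (factors U_X) along g |-> (g(x))_x *)
Definition UG (X : Type) (G : set (X -> X)) : ent (GT G) :=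
  gen [set D | exists (F : set X) (U : set (X * X)), [/\ finite_set F, UX G U &
    D = [set p : GT G * GT G | forall x, F x -> U (proj1_sig p.1 x, proj1_sig p.2 x)]]].
Arguments UG {X} G.

Definition prod_comap (T Y : Type) (B : uniformType) (i : T -> Y -> B) : ent T :=
  gen [set D | exists (F : set Y) (E : set (B * B)), [/\ finite_set F, entourage E &
    D = [set p : T * T | forall y, F y -> E (i p.1 y, i p.2 y)]]].

Definition is_completion (X : Type) (W : ent X) (B : uniformType) (e : X -> B) : Prop :=
  [/\ hausdorff_space B,
      (forall F : set_system B, ProperFilter F -> cauchy F -> exists b : B, F --> b),
      injective e,
      dense (range e) &
      W = gen [set D | exists2 E, entourage E & D = [set p : X * X | E (e p.1, e p.2)]]].

Definition roelcke_precompact (X : Type) (G : set (X -> X)) : Prop :=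
  forall W, is_meet (leftU G) (rightU G) W -> tot_bounded W.

(* The Roelcke compactification (completion of (G, L /\ R)) is the closure of
   i(G) in B^Y (product uniformity): i is a uniform embedding of (G, L /\ R)
   into B^Y. *)
Definition roelcke_compactification_is (X : Type) (G : set (X -> X))
    (Y : Type) (B : uniformType) (i : GT G -> Y -> B) : Prop :=
  forall W, is_meet (leftU G) (rightU G) W -> injective i /\ W = prod_comap i.

Definition extends_action (X : Type) (G : set (X -> X)) (B : uniformType)
    (e : X -> B) (act : GT G -> B -> B) : Prop :=
  forall g : GT G, continuous (act g) /\ forall x, act g (e x) = e (proj1_sig g x).

Definition hyp1 (X : Type) (G : set (X -> X)) : Prop :=
  forall F : set X, finite_set F -> forall g h : GT G,
    (forall x, F x -> exists2 s, St G F s & proj1_sig h x = s (proj1_sig g x)) ->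
    exists f s, [/\ St G F f, St G F s & proj1_sig h = f \o (proj1_sig g \o s)].

Definition hyp3 (X : Type) (G : set (X -> X)) (B : uniformType) (e : X -> B)
    (act : GT G -> B -> B) : Prop :=
  forall b : B, ~ range e b -> forall U, entourage U ->
    exists (F : set X) (V : set (B * B)), [/\ finite_set F, entourage V &
      forall g : GT G,
        [set h : GT G | forall x, F x -> V (e (proj1_sig g x), e (proj1_sig h x))]
        `<=` [set h : GT G | U (act g b, act h b)]].

(* Main.v *)
Require Import Defs.
From HB Require Import structures.
From mathcomp Require Import all_boot all_order all_algebra.
From mathcomp Require Import all_classical all_reals all_analysis.
From mathcomp Require Import finmap.
From Stdlib Require Import ClassicalEpsilon.
Local Open Scope classical_set_scope.
Set Implicit Arguments.

Lemma finite_ind T (P : set T -> Prop) : P set0 ->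
  (forall A x, P A -> P (x |` A)) -> forall A, finite_set A -> P A.
Proof.
elim/Pchoice: T => T in P *.
move=> P0 PS A /finite_fsetP [S ->].
have H : forall s : seq T, P [set x | x \in s].
  elim=> [|a s IH].
    by have -> : [set x : T | x \in [::]] = set0 by apply/seteqP; split=> x.
  have -> : [set x : T | x \in a :: s] = a |` [set x | x \in s].
    apply/seteqP; split=> x /=; rewrite inE.
      by case/orP => [/eqP ->|]; [left|right].
    by case=> [->|->]; rewrite ?eqxx ?orbT.
  exact: PS.
have -> : [set` S] = [set x | x \in (S : seq T)] by [].
exact: H.
Qed.

Definition Eo {X : Type} (G : set (X -> X)) (F : set X) : set (X * X) :=
  [set p | exists2 s, St G F s & p.2 = s p.1].
Definition Dg {X : Type} (G : set (X -> X)) (F : set X) : set (GT G * GT G) :=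
  [set p | forall x, F x -> Eo G F (proj1_sig p.1 x, proj1_sig p.2 x)].
Arguments Dg {X} G F _.


Lemma St_id X (G : set (X -> X)) F : perm_subgroup G -> St G F id.
Proof. by case=> _ Gid _ _; split. Qed.

Lemma St_comp X (G : set (X -> X)) F s t : perm_subgroup G ->
  St G F s -> St G F t -> St G F (s \o t).
Proof.
case=> _ _ Gc _ [Gs Hs] [Gt Ht]; split; first exact: Gc.
by move=> x Fx /=; rewrite Ht // Hs.
Qed.

Lemma St_inv X (G : set (X -> X)) F s : perm_subgroup G -> St G F s ->
  exists t, [/\ St G F t, cancel s t & cancel t s].
Proof.
case=> _ _ _ Gi [Gs Hs]; have [t [Gt st ts]] := Gi s Gs.
exists t; split => //; split => // x Fx.
by move: (st x); rewrite Hs.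
Qed.

Lemma St_anti X (G : set (X -> X)) F F' s : F `<=` F' -> St G F' s -> St G F s.
Proof. by move=> sub [Gs Hs]; split=> // x /sub; exact: Hs. Qed.

Lemma Eo_refl X (G : set (X -> X)) F : perm_subgroup G -> forall x, Eo G F (x, x).
Proof. by move=> PG x; exists id; [exact: St_id|]. Qed.

Lemma Eo_sym X (G : set (X -> X)) F : perm_subgroup G ->
  forall x y, Eo G F (x, y) -> Eo G F (y, x).
Proof.
move=> PG x y [s Ss /= ->]; have [t [St' st ts]] := St_inv PG Ss.
by exists t => //=; rewrite st.
Qed.

Lemma Eo_trans X (G : set (X -> X)) F : perm_subgroup G ->
  forall x y z, Eo G F (x, y) -> Eo G F (y, z) -> Eo G F (x, z).
Proof.
move=> PG x y z [s Ss /= ->] [t St' /= ->].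
by exists (t \o s); [exact: St_comp|].
Qed.

Lemma Eo_anti X (G : set (X -> X)) F F' : F `<=` F' -> Eo G F' `<=` Eo G F.
Proof. by move=> sub [x y] [s Ss /= ->]; exists s => //; exact: St_anti Ss. Qed.

Lemma UX_Eo X (G : set (X -> X)) F : finite_set F -> UX G (Eo G F).
Proof. by move=> fF; exists (Eo G F); split=> //; exists F; split. Qed.

Lemma UX_inv X (G : set (X -> X)) U : UX G U ->
  exists F, finite_set F /\ Eo G F `<=` U.
Proof. by case=> D [[F [fF ->]] sub]; exists F. Qed.

Lemma Dg_anti X (G : set (X -> X)) F F' : F `<=` F' -> Dg G F' `<=` Dg G F.
Proof. by move=> sub p Hp x Fx; apply: (Eo_anti sub); apply: Hp; exact: sub. Qed.

Lemma UG_iff X (G : set (X -> X)) : perm_subgroup G -> forall D,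
  UG G D <-> exists F, finite_set F /\ Dg G F `<=` D.
Proof.
move=> PG D; split.
- case=> B [[F [U [fF HU ->]]] sub]; have [F' [fF' sU]] := UX_inv HU.
  exists (F `|` F'); split; first by rewrite finite_setU.
  move=> p Hp; apply: sub => x Fx; apply: sU.
  apply: (Eo_anti (@subsetUr _ F F')); apply: Hp; by left.
- case=> F [fF sub]; exists (Dg G F); split=> //.
  by exists F, (Eo G F); split=> //; exact: UX_Eo.
Qed.

Lemma UG_up X (G : set (X -> X)) D E : UG G D -> D `<=` E -> UG G E.
Proof. by case=> B [HB s] sDE; exists B; split=> //; exact: subset_trans sDE. Qed.

Lemma UG_I X (G : set (X -> X)) : perm_subgroup G -> forall D E,
  UG G D -> UG G E -> UG G (D `&` E).
Proof.
move=> PG D E /(UG_iff PG D) [F1 [f1 s1]] /(UG_iff PG E) [F2 [f2 s2]].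
apply/(UG_iff PG); exists (F1 `|` F2); split; first by rewrite finite_setU.
move=> p Hp; split.
  by apply: s1; apply: (Dg_anti (@subsetUl _ F1 F2)).
by apply: s2; apply: (Dg_anti (@subsetUr _ F1 F2)).
Qed.

Lemma UG_unif X (G : set (X -> X)) : perm_subgroup G -> is_uniformity (UG G).
Proof.
move=> PG; split.
- apply/(UG_iff PG); exists set0; split; [exact: finite_set0|done].
split.
- move=> D E; exact: UG_up.
split.
- move=> D E; exact: UG_I.
split.
- move=> D /(UG_iff PG) [F [_ sub]] x; apply: sub => y _; exact: Eo_refl.
split.
- move=> D /(UG_iff PG) [F [fF sub]]; apply/(UG_iff PG); exists F; split => //.
  move=> p Hp; apply: sub => x Fx; apply: (Eo_sym PG); exact: Hp.
- move=> D /(UG_iff PG) [F [fF sub]]; exists (Dg G F); split.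
    by apply/(UG_iff PG); exists F; split.
  move=> x y z Hxy Hyz; apply: sub => w Fw; exact: (Eo_trans PG (Hxy w Fw) (Hyz w Fw)).
Qed.

Lemma GT_inj X (G : set (X -> X)) (g h : GT G) : proj1_sig g = proj1_sig h -> g = h.
Proof.
case: g h => g pg [h ph] /= E; subst h; congr exist; exact: Prop_irrelevance.
Qed.

Lemma part1 X (G : set (X -> X)) : perm_subgroup G -> hyp1 G ->
  is_meet (leftU G) (rightU G) (UG G).
Proof.
move=> PG H1; split.
- exact: UG_unif.
- move=> D /(UG_iff PG) [F [fF sub]].
  exists [set p : GT G * GT G | exists2 s, St G F s & proj1_sig p.2 = proj1_sig p.1 \o s].
  split; first by exists F.
  move=> [g h] [s Ss /= E]; apply: sub => x Fx /=; rewrite E /=.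
  case: Ss => _ Hs; rewrite Hs //; exact: Eo_refl.
- move=> D /(UG_iff PG) [F [fF sub]].
  exists [set p : GT G * GT G | exists2 s, St G F s & proj1_sig p.2 = s \o proj1_sig p.1].
  split; first by exists F.
  move=> [g h] [s Ss /= E]; apply: sub => x Fx /=; rewrite E; by exists s.
- move=> W uW WL WR D WD.
  case: uW => _ [_ [_ [_ [_ comp]]]]; have [E [WE EE]] := comp D WD.
  have [B1 [[F1 [fF1 EB1]] s1]] := WL E WE; subst B1.
  have [B2 [[F2 [fF2 EB2]] s2]] := WR E WE; subst B2.
  have fF : finite_set (F1 `|` F2) by rewrite finite_setU.
  apply/(UG_iff PG); exists (F1 `|` F2); split => //.
  move=> [g h] Hgh.
  have [f [s [Sf Ss Eh]]] := H1 _ fF g h Hgh.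
  have Gs : G (proj1_sig g \o s).
    case: PG => _ _ Gc _; apply: Gc; [exact: proj2_sig g | by case: Ss].
  pose gs : GT G := exist _ _ Gs.
  apply: (EE g gs h).
  + apply: s1; exists s => //; exact: St_anti Ss.
  + apply: s2; exists f => //; exact: St_anti Sf.
Qed.

Lemma meet_eq T (W1 W2 V W : ent T) : is_meet W1 W2 V -> is_meet W1 W2 W -> W = V.
Proof.
case=> uV V1 V2 mV [uW W1' W2' mW]; apply/seteqP; split; [exact: mV|exact: mW].
Qed.

Definition net T (R : T -> T -> Prop) :=
  exists N : set T, finite_set N /\ forall x, exists2 y, N y & R y x.

Lemma net_inter T (t0 : T) (R1 R2 : T -> T -> Prop) :
  (forall x y, R1 x y -> R1 y x) -> (forall x y z, R1 x y -> R1 y z -> R1 x z) ->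
  (forall x y, R2 x y -> R2 y x) -> (forall x y z, R2 x y -> R2 y z -> R2 x z) ->
  net R1 -> net R2 -> net (fun x y => R1 x y /\ R2 x y).
Proof.
move=> s1 t1 s2 t2 [N1 [f1 h1]] [N2 [f2 h2]].
pose c (p : T * T) := epsilon (inhabits t0) (fun z => R1 p.1 z /\ R2 p.2 z).
exists (c @` (N1 `*` N2)); split; first by apply: finite_image; apply: finite_setX.
move=> x; have [y1 N1y1 r1] := h1 x; have [y2 N2y2 r2] := h2 x.
have [c1 c2] : R1 y1 (c (y1, y2)) /\ R2 y2 (c (y1, y2)) :=
  epsilon_spec (inhabits t0) (fun z => R1 y1 z /\ R2 y2 z) (ex_intro _ x (conj r1 r2)).
exists (c (y1, y2)); first by exists (y1, y2).
by split; [exact: t1 (s1 _ _ c1) r1 | exact: t2 (s2 _ _ c2) r2].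
Qed.

Lemma net_pull T S (t0 : T) (f : T -> S) (R : S -> S -> Prop) (A : set S) :
  (forall x y, R x y -> R y x) -> (forall x y z, R x y -> R y z -> R x z) ->
  finite_set A -> (forall y, exists2 a, A a & R a y) ->
  net (fun g h => R (f g) (f h)).
Proof.
move=> s t fA hA.
pose c a := epsilon (inhabits t0) (fun g => R a (f g)).
exists (c @` A); split; first exact: finite_image.
move=> h; have [a Aa r] := hA (f h).
have c1 : R a (f (c a)) := epsilon_spec (inhabits t0) (fun g => R a (f g)) (ex_intro _ h r).
exists (c a); first by exists a.
exact: t (s _ _ c1) r.
Qed.

Lemma net_Dg X (G : set (X -> X)) F : perm_subgroup G -> finite_set F ->
  tot_bounded (UX G) -> forall F', finite_set F' ->
  net (fun g h : GT G => forall x, F' x -> Eo G F (proj1_sig g x, proj1_sig h x)).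
Proof.
move=> PG fF tb; have [A [fA hA]] := tb _ (UX_Eo G fF).
have Gid : G id by case: PG.
pose g0 : GT G := exist _ id Gid.
apply: (@finite_ind X (fun F' => net (fun g h : GT G =>
   forall x, F' x -> Eo G F (proj1_sig g x, proj1_sig h x)))).
- exists [set g0]; split; first exact: finite_set1.
  by move=> h; exists g0 => // x [].
- move=> F' x0 IH.
  have N2 := @net_pull _ _ g0 (fun g : GT G => proj1_sig g x0)
    (fun a b => Eo G F (a, b)) A (Eo_sym PG) (Eo_trans PG) fA hA.
  have := net_inter g0 _ _ _ _ IH N2.
  case.
  + by move=> g h H x Fx; exact: (Eo_sym PG (H x Fx)).
  + by move=> g h k H1 H2 x Fx; exact: (Eo_trans PG (H1 x Fx) (H2 x Fx)).
  + by move=> g h H; exact: (Eo_sym PG H).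
  + by move=> g h k H1 H2; exact: (Eo_trans PG H1 H2).
  move=> N [fN hN]; exists N; split=> // h; have [g Ng [r1 r2]] := hN h.
  by exists g => // x [->|Fx]; [exact: r2|exact: r1].
Qed.

Lemma tb_UG X (G : set (X -> X)) : perm_subgroup G ->
  tot_bounded (UX G) -> tot_bounded (UG G).
Proof.
move=> PG tb D /(UG_iff PG) [F [fF sub]].
have [N [fN hN]] := net_Dg PG fF tb fF.
exists N; split=> // h; have [g Ng r] := hN h; exists g => //; apply: sub; exact: r.
Qed.

Lemma UG_comp X (G : set (X -> X)) (B : uniformType) (e : X -> B) :
  perm_subgroup G -> is_completion (UX G) e ->
  UG G = prod_comap (fun g : GT G => fun x => e (proj1_sig g x)).
Proof.
move=> PG [_ _ _ _ hUX]; apply/seteqP; split.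
- move=> D /(UG_iff PG) [F [fF sub]].
  have := UX_Eo G fF; rewrite hUX; case=> B0 [[E entE EB0] sB0]; subst B0.
  exists [set p : GT G * GT G | forall y, F y -> E (e (proj1_sig p.1 y), e (proj1_sig p.2 y))].
  split; first by exists F, E.
  move=> p Hp; apply: sub => x Fx; apply: sB0; exact: Hp x Fx.
- move=> D [B0 [[F [E [fF entE EB0]]] sB0]]; subst B0.
  exists [set p : GT G * GT G | forall x, F x -> E (e (proj1_sig p.1 x), e (proj1_sig p.2 x))].
  split; last exact: sB0.
  exists F, [set p | E (e p.1, e p.2)]; split => //.
  by rewrite hUX; exists [set p | E (e p.1, e p.2)]; split=> //; exists E.
Qed.

Lemma UG_act X (G : set (X -> X)) (B : uniformType) (e : X -> B)
  (act : GT G -> B -> B) :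
  perm_subgroup G -> is_completion (UX G) e -> extends_action e act ->
  hyp3 e act -> UG G = prod_comap act.
Proof.
move=> PG [_ _ _ _ hUX] ext h3; apply/seteqP; split.
- move=> D /(UG_iff PG) [F [fF sub]].
  have := UX_Eo G fF; rewrite hUX; case=> B0 [[E entE EB0] sB0]; subst B0.
  exists [set p : GT G * GT G | forall y, (e @` F) y -> E (act p.1 y, act p.2 y)].
  split; first by exists (e @` F), E; split => //; exact: finite_image.
  move=> p Hp; apply: sub => x Fx; apply: sB0 => /=.
  rewrite -(ext _).2 -(ext _).2; apply: Hp; by exists x.
- move=> D [B0 [[F [E [fF entE EB0]]] sB0]]; subst B0.
  apply: UG_up sB0; move: F fF.
  apply: (@finite_ind B (fun F => UG G
    [set p : GT G * GT G | forall y, F y -> E (act p.1 y, act p.2 y)])).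
  + apply/(UG_iff PG); exists set0; split; [exact: finite_set0 | by move=> p _ y []].
  + move=> A b IH.
    have Hb : UG G [set p : GT G * GT G | E (act p.1 b, act p.2 b)].
      case: (pselect (range e b)) => [[x _ <-]|nr].
      * have : UX G [set p | E (e p.1, e p.2)].
          by rewrite hUX; exists [set p | E (e p.1, e p.2)]; split=> //; exists E.
        case/UX_inv => F' [fF' sU].
        apply/(UG_iff PG); exists (x |` F'); split.
          by rewrite finite_setU; split=> //; exact: finite_set1.
        move=> p Hp /=; rewrite (ext _).2 (ext _).2.
        apply: (sU (proj1_sig p.1 x, proj1_sig p.2 x)).
        apply: (Eo_anti (@subsetUr _ [set x] F')); apply: Hp; by left.
      * have [F' [V [fF' entV H]]] := h3 b nr E entE.
        have : UX G [set p | V (e p.1, e p.2)].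
          by rewrite hUX; exists [set p | V (e p.1, e p.2)]; split=> //; exists V.
        case/UX_inv => F'' [fF'' sU].
        apply/(UG_iff PG); exists (F' `|` F''); split; first by rewrite finite_setU.
        move=> [g h] Hp /=; apply: (H g h) => x Fx.
        apply: (sU (proj1_sig g x, proj1_sig h x)).
        apply: (Eo_anti (@subsetUr _ F' F'')); apply: Hp; by left.
    apply: UG_up (UG_I PG IH Hb) _.
    by move=> p [H1 H2] y [->|Ay]; [exact: H2|exact: H1].
Qed.

Unset Implicit Arguments.

Theorem theorem4p1 (X : Type) (G : set (X -> X)) :
  infinite_set [set: X] -> perm_subgroup G ->
  [/\ (hyp1 G -> is_meet (leftU G) (rightU G) (UG G)),
      (is_meet (leftU G) (rightU G) (UG G) -> tot_bounded (UX G) ->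
         roelcke_precompact G /\
         forall (B : uniformType) (e : X -> B), is_completion (UX G) e ->
           roelcke_compactification_is (fun g : GT G => fun x => e (proj1_sig g x))) &
      (is_meet (leftU G) (rightU G) (UG G) -> tot_bounded (UX G) ->
         forall (B : uniformType) (e : X -> B) (act : GT G -> B -> B),
           is_completion (UX G) e -> extends_action e act -> hyp3 e act ->
           UG G = prod_comap act /\ roelcke_compactification_is act)].
Proof.
move=> _ PG; split.
- exact: part1.
- move=> M tb; split.
    by move=> W MW; rewrite (meet_eq M MW); exact: tb_UG.
  move=> B e C W MW; split.
    move=> g h E; apply: GT_inj; apply: funext => x.
    case: C => _ _ inj _ _; apply: inj; exact: (congr1 (fun f => f x) E).
  by rewrite (meet_eq M MW); exact: UG_comp.
- move=> M tb B e act C ext h3.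
  have EU := UG_act PG C ext h3.
  split => // W MW; split; last by rewrite (meet_eq M MW).
  move=> g h Eq; apply: GT_inj; apply: funext => x.
  case: C => _ _ inj _ _; apply: inj.
  by rewrite -(ext g).2 -(ext h).2 Eq.
Qed.
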